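(* In the finite-sample setting, run the evaluation algorithm with $\rho_t=\widehat d_t^{\pi^\beta}$ and the finite-sample matrix estimation subroutine. There exists an absolute constant $C>0$ such that for $\delta\in(0,1)$, with probability at least $1-\delta$, \[ \big|\langle\rho_t,Z_t-Y_t\rangle\big|\le CH\sqrt{\frac{S\log(HS/\delta)}{K}}\qquad\text{for all }t\in[H]. \]
   Context: MDP: finite state space $\mathcal S$ ($S=|\mathcal S|$), finite action space $\mathcal A$ ($A=|\mathcal A|$), horizon $H$, transitions $P_t(\cdot\mid s,a)$, rewards $r_t:\mathcal S\times\mathcal A\to[0,1]$, initial distribution $\mu_1$; $\pi^\theta$ target and $\pi^\beta$ behavior policy. Functions on $\mathcal S\times\mathcal A$ are $S\times A$ matrices; $\langle X,Y\rangle=\sum_{s,a}X(s,a)Y(s,a)$. Finite-sample setting: $K$ independent trajectories $(s_t^k,a_t^k,r_t^k)$ generated by $\pi^\beta$; $n_t(s,a)=\sum_k\mathbb 1\{(s_t^k,a_t^k)=(s,a)\}$, $\widehat d_t^{\pi^\beta}=n_t/K$, $\widehat P_t(s'\mid s,a)=\frac1{n_t(s,a)}\sum_k\mathbb 1\{(s_t^k,a_t^k,s_{t+1}^k)=(s,a,s')\}$ for $n_t(s,a)>0$. Algorithm: $\widehat Q_{H+1}=0$; for $t=H,\dots,1$: $Z_t(s,a)=r_t(s,a)+\sum_{s',a'}\widehat P_t(s'\mid s,a)\pi^\theta_{t+1}(a'\mid s')\widehat Q_{t+1}(s',a')$ for $(s,a)\in\operatorname{supp}(\rho_t)$; $Y_t(s,a)=r_t(s,a)+\sum_{s',a'}P_t(s'\mid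 s,a)\pi^\theta_{t+1}(a'\mid s')\widehat Q_{t+1}(s',a')$; $\widehat Q_t$ a minimizer of $\|M\|_{\max}=\min_{M=UV^\top}\|U\|_{2\to\infty}\|V\|_{2\to\infty}$ ($\|\cdot\|_{2\to\infty}$ maximum row Euclidean norm) subject to $|\langle\rho_t,M-Z_t\rangle|\le|\langle\rho_t,Z_t-Y_t\rangle|$ and $\max_{s,a}|M(s,a)|\le H-t+1$. *)

(* Defs.v *)
From HB Require Import structures.
From mathcomp Require Import all_boot all_order all_algebra.
From mathcomp Require Import all_classical all_reals all_analysis.
Set Implicit Arguments. Unset Strict Implicit. Unset Printing Implicit Defensive.
Import Order.TTheory GRing.Theory Num.Theory.
Local Open Scope ring_scope.

(* Conventions: states are 'I_S, actions 'I_A; time steps are 0-indexed: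
   paper time t in {1..H} is ordinal t-1 : 'I_H.  A trajectory records the
   states s_1..s_{H+1} (ordinals 0..H of 'I_H.+1) and actions a_1..a_H. *)

Definition traj (S A H : nat) :=
  ({ffun 'I_H.+1 -> 'I_S} * {ffun 'I_H -> 'I_A})%type.
Definition dataset (S A H K : nat) := {ffun 'I_K -> traj S A H}.

Definition cur {H : nat} (t : 'I_H) : 'I_H.+1 := widen_ord (leqnSn H) t.
Definition nxt {H : nat} (t : 'I_H) : 'I_H.+1 := lift ord0 t.

Definition traj_prob {R : realType} {S A H : nat}
  (mu : 'I_S -> R) (piB : 'I_H -> 'I_S -> 'I_A -> R)
  (P : 'I_H -> 'I_S -> 'I_A -> 'I_S -> R) (x : traj S A H) : R :=
  mu (x.1 ord0) *
  \prod_(t < H) (piB t (x.1 (cur t)) (x.2 t) *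
                 P t (x.1 (cur t)) (x.2 t) (x.1 (nxt t))).

Definition data_prob {R : realType} {S A H K : nat}
  (mu : 'I_S -> R) (piB : 'I_H -> 'I_S -> 'I_A -> R)
  (P : 'I_H -> 'I_S -> 'I_A -> 'I_S -> R) (D : dataset S A H K) : R :=
  \prod_(k < K) traj_prob mu piB P (D k).

Definition Prob {R : realType} {S A H K : nat}
  (mu : 'I_S -> R) (piB : 'I_H -> 'I_S -> 'I_A -> R)
  (P : 'I_H -> 'I_S -> 'I_A -> 'I_S -> R) (E : pred (dataset S A H K)) : R :=
  \sum_(D : dataset S A H K | E D) data_prob mu piB P D.

Definition nvis {S A H K : nat} (D : dataset S A H K) (t : 'I_H)
  (s : 'I_S) (a : 'I_A) : nat :=
  #|[set k : 'I_K | ((D k).1 (cur t) == s) && ((D k).2 t == a)]|.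

Definition ntrans {S A H K : nat} (D : dataset S A H K) (t : 'I_H)
  (s : 'I_S) (a : 'I_A) (s' : 'I_S) : nat :=
  #|[set k : 'I_K | [&& (D k).1 (cur t) == s, (D k).2 t == a
                      & (D k).1 (nxt t) == s']]|.

Definition rho {R : realType} {S A H K : nat} (D : dataset S A H K) (t : 'I_H)
  : 'M[R]_(S, A) := \matrix_(s, a) ((nvis D t s a)%:R / K%:R).

(* \hat P_t(s'|s,a); only used where n_t(s,a) > 0 (weighted by rho_t) *)
Definition Phat {R : realType} {S A H K : nat} (D : dataset S A H K) (t : 'I_H)
  (s : 'I_S) (a : 'I_A) (s' : 'I_S) : R :=
  (ntrans D t s a s')%:R / (nvis D t s a)%:R.

Definition Vnext {R : realType} {S A H : nat}
  (piT : 'I_H.+1 -> 'I_S -> 'I_A -> R) (t : 'I_H) (Q : 'M[R]_(S, A))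
  (s' : 'I_S) : R := \sum_(a' < A) piT (nxt t) s' a' * Q s' a'.

Definition Zmat {R : realType} {S A H K : nat}
  (r : 'I_H -> 'I_S -> 'I_A -> R) (piT : 'I_H.+1 -> 'I_S -> 'I_A -> R)
  (D : dataset S A H K) (t : 'I_H) (Q : 'M[R]_(S, A)) : 'M[R]_(S, A) :=
  \matrix_(s, a) (r t s a + \sum_(s' < S) Phat D t s a s' * Vnext piT t Q s').

Definition Ymat {R : realType} {S A H : nat}
  (r : 'I_H -> 'I_S -> 'I_A -> R) (piT : 'I_H.+1 -> 'I_S -> 'I_A -> R)
  (P : 'I_H -> 'I_S -> 'I_A -> 'I_S -> R) (t : 'I_H) (Q : 'M[R]_(S, A))
  : 'M[R]_(S, A) :=
  \matrix_(s, a) (r t s a + \sum_(s' < S) P t s a s' * Vnext piT t Q s').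

Definition mdot {R : realType} {S A : nat} (X Y : 'M[R]_(S, A)) : R :=
  \sum_(s < S) \sum_(a < A) X s a * Y s a.

Definition norm2inf {R : realType} {m k : nat} (U : 'M[R]_(m, k)) : R :=
  \big[Num.max/0]_(i < m) Num.sqrt (\sum_(j < k) U i j ^+ 2).

Definition maxnorm {R : realType} {S A : nat} (M : 'M[R]_(S, A)) : R :=
  inf [set c : R | exists (k : nat) (U : 'M[R]_(S, k)) (V : 'M[R]_(A, k)),
                     M = U *m V^T /\ c = norm2inf U * norm2inf V].

(* feasibility constraints of the matrix-estimation step at (0-indexed) t,
   given Qnext = \hat Q_{t+1}; H - t here equals H - t + 1 in 1-indexed time *)
Definition feasible {R : realType} {S A H K : nat}
  (r : 'I_H -> 'I_S -> 'I_A -> R) (piT : 'I_H.+1 -> 'I_S -> 'I_A -> R)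
  (P : 'I_H -> 'I_S -> 'I_A -> 'I_S -> R) (D : dataset S A H K) (t : 'I_H)
  (Qnext M : 'M[R]_(S, A)) : Prop :=
  `|mdot (rho D t) (M - Zmat r piT D t Qnext)|
     <= `|mdot (rho D t) (Zmat r piT D t Qnext - Ymat r piT P t Qnext)|
  /\ (forall s a, `|M s a| <= (H - t)%:R).

Definition alg_run {R : realType} {S A H K : nat}
  (r : 'I_H -> 'I_S -> 'I_A -> R) (piT : 'I_H.+1 -> 'I_S -> 'I_A -> R)
  (P : 'I_H -> 'I_S -> 'I_A -> 'I_S -> R) (D : dataset S A H K)
  (Q : 'I_H.+1 -> 'M[R]_(S, A)) : Prop :=
  Q ord_max = 0 /\
  forall t : 'I_H,
    feasible r piT P D t (Q (nxt t)) (Q (cur t)) /\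
    (forall M, feasible r piT P D t (Q (nxt t)) M ->
       maxnorm (Q (cur t)) <= maxnorm M).

(* Main.v *)
Require Import Defs.
From HB Require Import structures.
From mathcomp Require Import all_boot all_order all_algebra.
From mathcomp Require Import all_classical all_reals all_analysis.
From mathcomp Require Import ring lra.
Import Order.TTheory GRing.Theory Num.Theory.
Local Open Scope ring_scope.
Set Implicit Arguments. Unset Strict Implicit. Unset Printing Implicit Defensive.

Definition fext {T : Type} {n : nat} (g : {ffun 'I_n -> T}) (v : T)
  : {ffun 'I_n.+1 -> T} :=
  [ffun i => if unlift ord_max i is Some j then g j else v].
Definition fres {T : Type} {n : nat} (f : {ffun 'I_n.+1 -> T}) : {ffun 'I_n -> T} :=
  [ffun j => f (widen_ord (leqnSn n) j)].

Lemma widen_lift n (j : 'I_n) : widen_ord (leqnSn n) j = lift ord_max j.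
Proof. by apply: val_inj; rewrite /= /bump leqNgt ltn_ord. Qed.

Lemma fext_widen T n (g : {ffun 'I_n -> T}) v j :
  fext g v (widen_ord (leqnSn n) j) = g j.
Proof. by rewrite ffunE widen_lift liftK. Qed.

Lemma fext_max T n (g : {ffun 'I_n -> T}) v : fext g v ord_max = v.
Proof. by rewrite ffunE unlift_none. Qed.

Lemma sum_ffunS (R : realType) (T : finType) n (G : {ffun 'I_n.+1 -> T} -> R) :
  \sum_(f : {ffun 'I_n.+1 -> T}) G f =
  \sum_(g : {ffun 'I_n -> T}) \sum_(v : T) G (fext g v).
Proof.
rewrite pair_big /=.
rewrite (reindex (fun p : {ffun 'I_n -> T} * T => fext p.1 p.2)) //=.
exists (fun f => (fres f, f ord_max)).
  move=> [g v] _ /=; congr pair; last by rewrite fext_max.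
  by apply/ffunP => j; rewrite ffunE fext_widen.
move=> f _ /=; apply/ffunP => i; rewrite ffunE.
case: unliftP => [j ->|->]; last by [].
by rewrite ffunE widen_lift.
Qed.

Definition text {S A H : nat} (x : traj S A H) (a : 'I_A) (s : 'I_S) : traj S A H.+1 :=
  (fext x.1 s, fext x.2 a).

Lemma sum_pair (R : realType) (T1 T2 : finType) (G : T1 * T2 -> R) :
  \sum_(x : T1 * T2) G x = \sum_(a : T1) \sum_(b : T2) G (a, b).
Proof. by rewrite pair_bigA; apply: eq_bigr => -[]. Qed.

Lemma sum_traj (R : realType) S A H (G : traj S A H.+1 -> R) :
  \sum_(x : traj S A H.+1) G x =
  \sum_(x : traj S A H) \sum_(a : 'I_A) \sum_(s : 'I_S) G (text x a s).
Proof.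
rewrite [LHS](sum_pair G) [RHS]sum_pair sum_ffunS.
apply: eq_bigr => f _.
rewrite exchange_big /= sum_ffunS.
apply: eq_bigr => g _.
by rewrite exchange_big.
Qed.


Lemma cur_widen H (t : 'I_H) : cur (widen_ord (leqnSn H) t) = widen_ord (leqnSn H.+1) (cur t).
Proof. exact: val_inj. Qed.
Lemma nxt_widen H (t : 'I_H) : nxt (widen_ord (leqnSn H) t) = widen_ord (leqnSn H.+1) (nxt t).
Proof. exact: val_inj. Qed.
Lemma cur_max H : cur (ord_max : 'I_H.+1) = widen_ord (leqnSn H.+1) ord_max.
Proof. exact: val_inj. Qed.
Lemma nxt_max H : nxt (ord_max : 'I_H.+1) = ord_max.
Proof. exact: val_inj. Qed.
Lemma ord0_widen H : (ord0 : 'I_H.+2) = widen_ord (leqnSn H.+1) ord0.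
Proof. exact: val_inj. Qed.

Lemma tp_ext (R : realType) S A H (mu : 'I_S -> R) (piB : 'I_H.+1 -> 'I_S -> 'I_A -> R)
  (P : 'I_H.+1 -> 'I_S -> 'I_A -> 'I_S -> R) (x : traj S A H) a s :
  traj_prob mu piB P (text x a s) =
  traj_prob mu (fun t => piB (widen_ord (leqnSn H) t)) (fun t => P (widen_ord (leqnSn H) t)) x
  * (piB ord_max (x.1 ord_max) a * P ord_max (x.1 ord_max) a s).
Proof.
rewrite /traj_prob big_ord_recr /= mulrA; congr (_ * _ * _).
- by rewrite ord0_widen fext_widen.
- by apply: eq_bigr => t _; rewrite cur_widen nxt_widen !fext_widen.
by rewrite cur_max nxt_max fext_widen !fext_max.
Qed.

Lemma sum_ffun0 (R : realType) (T : finType) (c : R) :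
  \sum_(g : {ffun 'I_0 -> T}) c = c.
Proof. by rewrite sumr_const card_ffun card_ord expn0. Qed.

Lemma tp_sum1 (R : realType) S A H (mu : 'I_S -> R) (piB : 'I_H -> 'I_S -> 'I_A -> R)
  (P : 'I_H -> 'I_S -> 'I_A -> 'I_S -> R) :
  \sum_(s < S) mu s = 1 ->
  (forall t s, \sum_(a < A) piB t s a = 1) ->
  (forall t s a, \sum_(s' < S) P t s a s' = 1) ->
  \sum_(x : traj S A H) traj_prob mu piB P x = 1.
Proof.
move=> hmu; elim: H piB P => [|H IH] piB P hpiB hP.
  rewrite [LHS](sum_pair (traj_prob mu piB P)) sum_ffunS.
  rewrite -[RHS](@sum_ffun0 _ 'I_S); apply: eq_bigr => g _.
  rewrite -hmu; apply: eq_bigr => v _.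
  rewrite /traj_prob; under eq_bigr do rewrite big_ord0 mulr1 /=.
  rewrite sumr_const card_ffun !card_ord expn0 /= mulr1n.
  have -> : (ord0 : 'I_1) = ord_max by apply: val_inj.
  by rewrite fext_max.
rewrite sum_traj.
rewrite -(IH (fun t => piB (widen_ord (leqnSn H) t)) (fun t => P (widen_ord (leqnSn H) t))) //.
apply: eq_bigr => x _.
rewrite -[RHS]mulr1 -(hpiB ord_max (x.1 ord_max)) mulr_sumr.
apply: eq_bigr => a _.
rewrite -[RHS]mulr1 -(hP ord_max (x.1 ord_max) a) !mulr_sumr.
by apply: eq_bigr => s _; rewrite tp_ext mulrA.
Qed.

Definition Wf {R : realType} {S A H : nat} (P : 'I_H -> 'I_S -> 'I_A -> 'I_S -> R)
  (t : 'I_H) (x : traj S A H) (s' : 'I_S) : R :=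
  ((x.1 (nxt t) == s')%:R - P t (x.1 (cur t)) (x.2 t) s').
Definition Yf {R : realType} {S A H : nat} (P : 'I_H -> 'I_S -> 'I_A -> 'I_S -> R)
  (t : 'I_H) (sg : 'I_S -> R) (x : traj S A H) : R :=
  \sum_(s' < S) sg s' * Wf P t x s'.

Lemma sum_eq1 (R : realType) (T : finType) (c : T) (f : T -> R) :
  \sum_(s : T) f s * (c == s)%:R = f c.
Proof.
rewrite (bigD1 c) //= eqxx mulr1 big1 ?addr0 // => s hs.
by rewrite eq_sym (negPf hs) mulr0.
Qed.

Lemma Yf_widen (R : realType) S A H (P : 'I_H.+1 -> 'I_S -> 'I_A -> 'I_S -> R) t sg
  (x : traj S A H) a s :
  Yf P (widen_ord (leqnSn H) t) sg (text x a s) =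
  Yf (fun t => P (widen_ord (leqnSn H) t)) t sg x.
Proof.
by apply: eq_bigr => s' _; rewrite /Wf /= cur_widen nxt_widen !fext_widen.
Qed.

Lemma Yf_max (R : realType) S A H (P : 'I_H.+1 -> 'I_S -> 'I_A -> 'I_S -> R) sg
  (x : traj S A H) a s :
  Yf P ord_max sg (text x a s) =
  sg s - \sum_(s' < S) sg s' * P ord_max (x.1 ord_max) a s'.
Proof.
rewrite /Yf /Wf /= cur_max nxt_max fext_widen !fext_max.
by under eq_bigr do rewrite mulrBr; rewrite sumrB sum_eq1.
Qed.

Lemma tp_marg (R : realType) S A H (mu : 'I_S -> R) (piB : 'I_H -> 'I_S -> 'I_A -> R)
  (P : 'I_H -> 'I_S -> 'I_A -> 'I_S -> R) :
  (forall t s, \sum_(a < A) piB t s a = 1) ->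
  (forall t s a, \sum_(s' < S) P t s a s' = 1) ->
  forall t sg, \sum_(x : traj S A H) traj_prob mu piB P x * Yf P t sg x = 0.
Proof.
elim: H piB P => [|H IH] piB P hpiB hP t sg; first by case: t.
rewrite sum_traj.
case: (unliftP ord_max t) => [t' ->|->].
  rewrite -widen_lift.
  rewrite -[RHS](IH (fun t => piB (widen_ord (leqnSn H) t)) (fun t => P (widen_ord (leqnSn H) t)) _ _ t' sg) //.
  apply: eq_bigr => x _.
  rewrite -[RHS]mulr1 -(hpiB ord_max (x.1 ord_max)) mulr_sumr.
  apply: eq_bigr => a _.
  rewrite -[RHS]mulr1 -(hP ord_max (x.1 ord_max) a) !mulr_sumr.
  apply: eq_bigr => s _; rewrite tp_ext Yf_widen -mulr_sumr /Yf; ring.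
apply: big1 => x _; apply: big1 => a _.
under eq_bigr do rewrite tp_ext Yf_max.
set c := \sum_(s' < S) sg s' * P ord_max (x.1 ord_max) a s'.
transitivity (traj_prob mu (fun t => piB (widen_ord (leqnSn H) t)) (fun t => P (widen_ord (leqnSn H) t)) x
  * piB ord_max (x.1 ord_max) a *
  (c - (\sum_(s < S) P ord_max (x.1 ord_max) a s) * c)).
  rewrite [X in _ - X]mulr_suml /c -sumrB mulr_sumr; apply: eq_bigr => s _; ring.
by rewrite hP mul1r subrr mulr0.
Qed.


Lemma Yf_bound (R : realType) S A H (P : 'I_H -> 'I_S -> 'I_A -> 'I_S -> R) t sg x :
  (forall t s a s', 0 <= P t s a s') ->
  (forall t s a, \sum_(s' < S) P t s a s' = 1) ->
  (forall s, `|sg s| <= 1) ->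
  `|Yf P t sg x| <= 2.
Proof.
move=> hP0 hP hsg.
apply: (le_trans (ler_norm_sum _ _ _)).
apply: (@le_trans _ _ (\sum_(s' < S) ((x.1 (nxt t) == s')%:R + P t (x.1 (cur t)) (x.2 t) s'))).
  apply: ler_sum => s' _; rewrite normrM.
  have h1 : `|Wf P t x s'| <= (x.1 (nxt t) == s')%:R + P t (x.1 (cur t)) (x.2 t) s'.
    by apply: (le_trans (ler_normB _ _)); rewrite normr_nat ger0_norm.
  have h2 := hsg s'.
  have h3 : 0 <= `|Wf P t x s'| by [].
  have h4 : 0 <= `|sg s'| by [].
  nra.
rewrite big_split /= hP.
have -> : \sum_(s' < S) ((x.1 (nxt t) == s')%:R : R) = 1.
  by rewrite -[RHS](sum_eq1 (x.1 (nxt t)) (fun _ => 1 : R)); apply: eq_bigr => s _; rewrite mul1r.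
lra.
Qed.

Lemma expR_le (R : realType) (y : R) : y <= 1/2 -> expR y <= 1 + y + 2 * y ^+ 2.
Proof.
move=> hy.
have h := expR_ge1Dx (- y).
have e := expR_gt0 y.
have hEF : expR y * expR (- y) = 1 by rewrite expRN mulfV // gt_eqF.
have h1 : expR y * (1 - y) <= 1.
  rewrite -hEF; apply: ler_wpM2l; [exact: ltW | lra].
have h2 : 0 <= y ^+ 2 * (1 - 2 * y) by apply: mulr_ge0; [exact: sqr_ge0 | lra].
nra.
Qed.

Lemma tp_ge0 (R : realType) S A H (mu : 'I_S -> R) (piB : 'I_H -> 'I_S -> 'I_A -> R)
  (P : 'I_H -> 'I_S -> 'I_A -> 'I_S -> R) x :
  (forall s, 0 <= mu s) -> (forall t s a, 0 <= piB t s a) ->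
  (forall t s a s', 0 <= P t s a s') -> 0 <= traj_prob mu piB P x.
Proof.
move=> h1 h2 h3; rewrite /traj_prob; apply: mulr_ge0 => //.
by apply: prodr_ge0 => t _; apply: mulr_ge0.
Qed.

Lemma mgf (R : realType) S A H (mu : 'I_S -> R) (piB : 'I_H -> 'I_S -> 'I_A -> R)
  (P : 'I_H -> 'I_S -> 'I_A -> 'I_S -> R) t sg (l : R) :
  (forall s, 0 <= mu s) -> \sum_(s < S) mu s = 1 ->
  (forall t s a, 0 <= piB t s a) -> (forall t s, \sum_(a < A) piB t s a = 1) ->
  (forall t s a s', 0 <= P t s a s') ->
  (forall t s a, \sum_(s' < S) P t s a s' = 1) ->
  (forall s, `|sg s| <= 1) -> 0 <= l <= 1/4 ->
  \sum_(x : traj S A H) traj_prob mu piB P x * expR (l * Yf P t sg x)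
    <= expR (8 * l ^+ 2).
Proof.
move=> hmu0 hmu hpiB0 hpiB hP0 hP hsg hl.
apply: (@le_trans _ _ (\sum_(x : traj S A H) traj_prob mu piB P x *
    (1 + l * Yf P t sg x + 8 * l ^+ 2))).
  apply: ler_sum => x _; apply: ler_wpM2l; first exact: tp_ge0.
  have hY : `|Yf P t sg x| <= 2 by apply: Yf_bound.
  have hY2 : Yf P t sg x ^+ 2 <= 4.
    rewrite -real_normK ?num_real //.
    have : 0 <= `|Yf P t sg x| by [].
    nra.
  have hly : l * Yf P t sg x <= 1/2.
    have := ler_norm (Yf P t sg x); nra.
  apply: (le_trans (expR_le hly)).
  have : 0 <= l ^+ 2 by exact: sqr_ge0.
  rewrite exprMn; nra.
under eq_bigr do rewrite !mulrDr.
rewrite !big_split /= -mulr_suml.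
rewrite ?mulr1.
rewrite tp_sum1 // ?mul1r.
have e2 : \sum_(x : traj S A H) traj_prob mu piB P x * (l * Yf P t sg x) = 0.
  rewrite (eq_bigr (fun x => l * (traj_prob mu piB P x * Yf P t sg x))); last first.
    by move=> x _; rewrite mulrCA.
  by rewrite -mulr_sumr (tp_marg mu hpiB hP t sg) mulr0.
have e3 : \sum_(x : traj S A H) traj_prob mu piB P x * (8 * l ^+ 2) = 8 * l ^+ 2.
  by rewrite -mulr_suml tp_sum1 // mul1r.
rewrite e2 e3 addr0.
have := expR_ge1Dx (8 * l ^+ 2); lra.
Qed.

Lemma sum_dataset (R : realType) S A H K (F : traj S A H -> R) :
  \sum_(D : dataset S A H K) \prod_(k < K) F (D k) = (\sum_(x : traj S A H) F x) ^+ K.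
Proof.
rewrite -[in RHS](card_ord K) -prodr_const.
by rewrite bigA_distr_bigA.
Qed.

Lemma chernoffD (R : realType) S A H K (mu : 'I_S -> R) (piB : 'I_H -> 'I_S -> 'I_A -> R)
  (P : 'I_H -> 'I_S -> 'I_A -> 'I_S -> R) t sg (u : R) :
  (forall s, 0 <= mu s) -> \sum_(s < S) mu s = 1 ->
  (forall t s a, 0 <= piB t s a) -> (forall t s, \sum_(a < A) piB t s a = 1) ->
  (forall t s a s', 0 <= P t s a s') ->
  (forall t s a, \sum_(s' < S) P t s a s' = 1) ->
  (forall s, `|sg s| <= 1) -> 0 <= u <= 4 ->
  Prob mu piB P (fun D : dataset S A H K => K%:R * u < \sum_(k < K) Yf P t sg (D k))
    <= expR (- (K%:R * u ^+ 2 / 32)).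
Proof.
move=> hmu0 hmu hpiB0 hpiB hP0 hP hsg hu.
set l := u / 16.
have hl : 0 <= l <= 1/4 by rewrite /l; lra.
apply: (@le_trans _ _ (\sum_(D : dataset S A H K) data_prob mu piB P D *
   expR (l * (\sum_(k < K) Yf P t sg (D k) - K%:R * u)))).
  rewrite /Prob [X in X <= _]big_mkcond /=; apply: ler_sum => D _.
  have hd : 0 <= data_prob mu piB P D.
    by apply: prodr_ge0 => k _; apply: tp_ge0.
  case: ifP => h.
    rewrite -{1}[data_prob _ _ _ D]mulr1; apply: ler_wpM2l => //.
    have h1 := expR_ge1Dx (l * (\sum_(k < K) Yf P t sg (D k) - K%:R * u)).
    have h2 : 0 <= l * (\sum_(k < K) Yf P t sg (D k) - K%:R * u).
      apply: mulr_ge0; first lra.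
      by rewrite subr_ge0 ltW.
    lra.
  exact: mulr_ge0 hd (expR_ge0 _).
have E : forall D : dataset S A H K,
    data_prob mu piB P D * expR (l * (\sum_(k < K) Yf P t sg (D k) - K%:R * u)) =
    expR (- (l * (K%:R * u))) *
      \prod_(k < K) (traj_prob mu piB P (D k) * expR (l * Yf P t sg (D k))).
  move=> D; rewrite mulrBr mulr_sumr expRD expR_sum big_split /= /data_prob -mulrN.
  ring.
under eq_bigr do rewrite E.
rewrite -mulr_sumr.
rewrite (sum_dataset K (fun x => traj_prob mu piB P x * expR (l * Yf P t sg x))).
apply: (@le_trans _ _ (expR (- (l * (K%:R * u))) * expR (8 * l ^+ 2) ^+ K)).
  apply: ler_wpM2l; first exact: expR_ge0.
  apply: lerXn2r.
  - rewrite qualifE /=; apply: sumr_ge0 => x _; apply: mulr_ge0; [exact: tp_ge0 | exact: expR_ge0].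
  - by rewrite qualifE /= expR_ge0.
  - exact: mgf.
rewrite -expRM_natl -expRD /l.
rewrite le_eqVlt; apply/orP; left; apply/eqP; congr expR; field.
by [].
Qed.


Definition ind {R : realType} {S A H K : nat} (D : dataset S A H K) (t : 'I_H)
  (s : 'I_S) (a : 'I_A) (k : 'I_K) : R :=
  (((D k).1 (cur t) == s)%:R * ((D k).2 t == a)%:R).

Lemma nvisE (R : realType) S A H K (D : dataset S A H K) t s a :
  (nvis D t s a)%:R = \sum_(k < K) ind D t s a k :> R.
Proof.
rewrite /nvis -sum1_card natr_sum big_mkcond /=; apply: eq_bigr => k _.
rewrite inE /ind; do 2 case: eqP => _ /=; by rewrite ?mulr1 ?mul0r ?mulr0.
Qed.

Lemma ntransE (R : realType) S A H K (D : dataset S A H K) t s a s' :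
  (ntrans D t s a s')%:R = \sum_(k < K) ind D t s a k * ((D k).1 (nxt t) == s')%:R :> R.
Proof.
rewrite /ntrans -sum1_card natr_sum big_mkcond /=; apply: eq_bigr => k _.
rewrite inE /ind; do 3 case: eqP => _ /=; by rewrite ?mulr1 ?mul0r ?mulr0.
Qed.

Lemma nvis_Phat (R : realType) S A H K (D : dataset S A H K) t s a s' :
  (nvis D t s a)%:R * Phat D t s a s' = (ntrans D t s a s')%:R :> R.
Proof.
rewrite /Phat.
have [h0|hn] := eqVneq (nvis D t s a) 0%N.
  have : (ntrans D t s a s' <= nvis D t s a)%N.
    rewrite /ntrans /nvis; apply: subset_leq_card; apply/fintype.subsetP => k; rewrite !inE.
    by case/and3P => -> ->.
  by rewrite h0 leqn0 => /eqP ->; rewrite mul0r.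
by rewrite mulrCA mulfV ?mulr1 // pnatr_eq0.
Qed.

Lemma mdot_eq (R : realType) S A H K (D : dataset S A H K) (t : 'I_H)
  (r : 'I_H -> 'I_S -> 'I_A -> R) (piT : 'I_H.+1 -> 'I_S -> 'I_A -> R)
  (P : 'I_H -> 'I_S -> 'I_A -> 'I_S -> R) (Qn : 'M[R]_(S, A)) :
  (0 < K)%N ->
  K%:R * mdot (rho D t) (Zmat r piT D t Qn - Ymat r piT P t Qn) =
  \sum_(k < K) \sum_(s' < S) Wf P t (D k) s' * Vnext piT t Qn s'.
Proof.
move=> hK.
rewrite /mdot mulr_sumr; under eq_bigr do rewrite mulr_sumr.
transitivity (\sum_(s < S) \sum_(a < A) \sum_(k < K) ind D t s a k *
   \sum_(s' < S) Wf P t (D k) s' * Vnext piT t Qn s').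
  apply: eq_bigr => s _; apply: eq_bigr => a _.
  rewrite !mxE mulrA mulrCA mulfV ?pnatr_eq0 -?lt0n // mulr1.
  have -> : forall x y z : R, x + y - (x + z) = y - z by move=> x y z; ring.
  rewrite -sumrB mulr_sumr.
  transitivity (\sum_(s' < S) \sum_(k < K) ind D t s a k *
     (Wf P t (D k) s' * Vnext piT t Qn s')).
    apply: eq_bigr => s' _.
    rewrite -mulrBl mulrA mulrBr nvis_Phat ntransE nvisE mulr_suml -sumrB mulr_suml.
    apply: eq_bigr => k _; rewrite /ind /Wf.
    by do 2 case: eqP => [->|_] /=; ring.
  by rewrite exchange_big /=; apply: eq_bigr => k _; rewrite mulr_sumr.
transitivity (\sum_(s < S) \sum_(k < K) ((D k).1 (cur t) == s)%:R *
   \sum_(s' < S) Wf P t (D k) s' * Vnext piT t Qn s').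
  apply: eq_bigr => s _; rewrite exchange_big /=; apply: eq_bigr => k _.
  rewrite /ind.
  set X := (_ * \sum_(s' < S) _).
  rewrite (eq_bigr (fun i => X * ((D k).2 t == i)%:R)); last by move=> i _; rewrite mulrAC.
  exact: sum_eq1.
rewrite exchange_big /=; apply: eq_bigr => k _.
set X := \sum_(s' < S) Wf P t (D k) s' * Vnext piT t Qn s'.
rewrite [LHS](eq_bigr (fun i => X * ((D k).1 (cur t) == i)%:R)); last by move=> i _; rewrite mulrC.
exact: sum_eq1.
Qed.

Definition sgnf {R : realType} {S : nat} (b : {ffun 'I_S -> bool}) (s : 'I_S) : R :=
  if b s then 1 else -1.

Lemma sgnf_bound (R : realType) S (b : {ffun 'I_S -> bool}) s : `|sgnf b s : R| <= 1.
Proof. by rewrite /sgnf; case: (b s); rewrite ?normrN normr1. Qed.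

Lemma mdot_bound (R : realType) S A H K (D : dataset S A H K) (t : 'I_H)
  (r : 'I_H -> 'I_S -> 'I_A -> R) (piT : 'I_H.+1 -> 'I_S -> 'I_A -> R)
  (P : 'I_H -> 'I_S -> 'I_A -> 'I_S -> R) (Qn : 'M[R]_(S, A)) :
  (0 < K)%N ->
  (forall t s a, 0 <= piT t s a) -> (forall t s, \sum_(a < A) piT t s a = 1) ->
  (forall s a, `|Qn s a| <= H%:R) ->
  exists b : {ffun 'I_S -> bool},
    K%:R * `|mdot (rho D t) (Zmat r piT D t Qn - Ymat r piT P t Qn)| <=
    H%:R * \sum_(k < K) Yf P t (sgnf b) (D k).
Proof.
move=> hK hpiT0 hpiT hQ.
set E := fun s' => \sum_(k < K) Wf P t (D k) s'.
exists [ffun s' => 0 <= E s'].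
have hV : forall s', `|Vnext piT t Qn s'| <= H%:R.
  move=> s'; rewrite /Vnext; apply: (le_trans (ler_norm_sum _ _ _)).
  apply: (@le_trans _ _ (\sum_(a < A) piT (nxt t) s' a * H%:R)).
    by apply: ler_sum => a _; rewrite normrM ger0_norm //; apply: ler_wpM2l.
  by rewrite -mulr_suml hpiT mul1r.
have hH : (0 : R) <= H%:R by [].
rewrite -[K%:R]ger0_norm // -normrM mdot_eq //.
rewrite exchange_big /=.
apply: (@le_trans _ _ (\sum_(s' < S) `|Vnext piT t Qn s'| * `|E s'|)).
  apply: (le_trans (ler_norm_sum _ _ _)); apply: ler_sum => s' _.
  have -> : `|Vnext piT t Qn s'| * `|E s'| = `|\sum_(i < K) Wf P t (D i) s' * Vnext piT t Qn s'|.
    by rewrite -normrM /E mulr_sumr; congr (`|_|); apply: eq_bigr => k _; rewrite mulrC.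
  by [].
apply: (@le_trans _ _ (\sum_(s' < S) H%:R * `|E s'|)).
  by apply: ler_sum => s' _; apply: ler_wpM2r.
rewrite -mulr_sumr; apply: ler_wpM2l => //.
rewrite /Yf exchange_big /=; apply: ler_sum => s' _.
rewrite -mulr_sumr -/(E s') /sgnf ffunE.
case: ifP => h.
  by rewrite mul1r ger0_norm.
by rewrite ltr0_norm ?mulN1r // ltNge h.
Qed.


Lemma Yf_S1 (R : realType) S A H (P : 'I_H -> 'I_S -> 'I_A -> 'I_S -> R) t sg x :
  S = 1%N -> (forall t s a, \sum_(s' < S) P t s a s' = 1) -> Yf P t sg x = 0.
Proof.
move=> e; subst S => hP.
rewrite /Yf big_ord1 /Wf.
have := hP t (x.1 (cur t)) (x.2 t); rewrite big_ord1 => ->.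
by rewrite [x.1 (nxt t)]ord1 eqxx subrr mulr0.
Qed.

Lemma term_bound (R : realType) S A H K (mu : 'I_S -> R) (piB : 'I_H -> 'I_S -> 'I_A -> R)
  (P : 'I_H -> 'I_S -> 'I_A -> 'I_S -> R) (t : 'I_H) (b : {ffun 'I_S -> bool}) (delta : R) :
  (0 < K)%N ->
  (forall s, 0 <= mu s) -> \sum_(s < S) mu s = 1 ->
  (forall t s a, 0 <= piB t s a) -> (forall t s, \sum_(a < A) piB t s a = 1) ->
  (forall t s a s', 0 <= P t s a s') ->
  (forall t s a, \sum_(s' < S) P t s a s' = 1) ->
  0 < delta < 1 ->
  Prob mu piB P (fun D : dataset S A H K =>
     K%:R * (8 * Num.sqrt (S%:R * ln (H%:R * S%:R / delta) / K%:R))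
       < \sum_(k < K) Yf P t (sgnf b) (D k))
  <= delta / (H%:R * 2 ^+ S).
Proof.
move=> hK hmu0 hmu hpiB0 hpiB hP0 hP hd.
have hH : (0 < H)%N by apply: (leq_ltn_trans (leq0n t) (ltn_ord t)).
have hS : (0 < S)%N.
  rewrite lt0n; apply/eqP => e.
  move: hmu; rewrite big1; first by move/eqP; rewrite eq_sym oner_eq0.
  by move=> i _; have := ltn_ord i; rewrite {2}e.
have hHr : (1 : R) <= H%:R by rewrite ler1n.
have hSr : (1 : R) <= S%:R by rewrite ler1n.
have hKr : (0 : R) < K%:R by rewrite ltr0n.
have hbnd : 0 <= delta / (H%:R * 2 ^+ S).
  apply: divr_ge0; first lra.
  by apply: mulr_ge0; [lra | apply: exprn_ge0].
set L := ln (H%:R * S%:R / delta).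
set u := 8 * Num.sqrt (S%:R * L / K%:R).
have hX : 1 <= H%:R * S%:R / delta.
  rewrite ler_pdivlMr; last lra.
  nra.
have hL0 : 0 <= L by apply: ln_ge0.
have hsq : 0 <= S%:R * L / K%:R by apply: divr_ge0; [apply: mulr_ge0; lra | lra].
have hu0 : 0 <= u by rewrite /u; apply: mulr_ge0; [lra | apply: sqrtr_ge0].
have hYb : forall x : traj S A H, Yf P t (sgnf b) x <= 2.
  move=> x; apply: (le_trans (ler_norm _)); apply: Yf_bound => //.
  exact: sgnf_bound.
have hsumY : forall D : dataset S A H K, \sum_(k < K) Yf P t (sgnf b) (D k) <= 2 * K%:R.
  move=> D; apply: (@le_trans _ _ (\sum_(k < K) (2 : R))).
    by apply: ler_sum => k _.
  by rewrite sumr_const card_ord mulr_natr.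
have [S1|S2] : S = 1%N \/ (2 <= S)%N.
  by have [h|h] := leqP S 1; [left; apply/eqP; rewrite eqn_leq h hS | right].
  rewrite /Prob big_pred0 // => D.
  apply/negbTE; rewrite -leNgt.
  rewrite (eq_bigr (fun _ => 0)); last by move=> k _; apply: Yf_S1.
  rewrite big1 //; apply: mulr_ge0; lra.
have hS2 : (2 : R) <= S%:R by rewrite ler_nat.
have [u4|u4] := lerP u 4; last first.
  rewrite /Prob big_pred0 // => D.
  apply/negbTE; rewrite -leNgt.
  apply: (le_trans (hsumY D)); nra.
have hc := @chernoffD R S A H K mu piB P t (sgnf b) u hmu0 hmu hpiB0 hpiB hP0 hP
  (@sgnf_bound R S b).
apply: (le_trans (hc _)); first by rewrite hu0 u4.
have hKu : K%:R * u ^+ 2 / 32 = 2 * S%:R * L.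
  rewrite /u exprMn sqr_sqrtr //; field; lra.
rewrite hKu.
have hL2 : ln 2 <= L.
  rewrite /L ler_ln ?posrE; [|lra|lra].
  rewrite ler_pdivlMr; last lra.
  nra.
have hLH : ln (H%:R / delta) <= L.
  rewrite /L ler_ln ?posrE; [|apply: divr_gt0; lra|lra].
  apply: ler_wpM2r; first by rewrite invr_ge0; lra.
  nra.
apply: (@le_trans _ _ (expR (- (S%:R * ln 2 + ln (H%:R / delta))))).
  rewrite ler_expR lerN2.
  have : 0 <= ln (2 : R) by apply: ln_ge0; lra.
  nra.
rewrite expRN expRD expRM_natl !lnK ?posrE; [|apply: divr_gt0; lra|lra].
rewrite le_eqVlt; apply/orP; left; apply/eqP; field.
have h2 : (2 : R) ^+ S != 0 by rewrite expf_neq0 // pnatr_eq0.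
have hH0 : (H%:R : R) != 0 by rewrite pnatr_eq0 -lt0n.
have hd0 : delta != 0 by rewrite gt_eqF //; lra.
by rewrite h2 hH0 hd0.
Qed.


Lemma Q_bound (R : realType) S A H K (r : 'I_H -> 'I_S -> 'I_A -> R)
  (piT : 'I_H.+1 -> 'I_S -> 'I_A -> R) (P : 'I_H -> 'I_S -> 'I_A -> 'I_S -> R)
  (D : dataset S A H K) (Q : 'I_H.+1 -> 'M[R]_(S, A)) :
  alg_run r piT P D Q -> forall i s a, `|Q i s a| <= H%:R.
Proof.
case=> h0 hall i s a.
case: (unliftP ord_max i) => [j ->|->]; last by rewrite h0 mxE normr0.
have := (hall j).1.2 s a.
have -> : cur j = lift ord_max j by apply: val_inj; rewrite /= /bump leqNgt ltn_ord.
move/le_trans; apply; rewrite ler_nat; exact: leq_subr.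
Qed.

Unset Implicit Arguments.

Theorem lemma4 (R : realType) :
  exists C : R, 0 < C /\
  forall (S A H K : nat)
    (mu : 'I_S -> R)
    (piB : 'I_H -> 'I_S -> 'I_A -> R)
    (piT : 'I_H.+1 -> 'I_S -> 'I_A -> R)
    (P : 'I_H -> 'I_S -> 'I_A -> 'I_S -> R)
    (r : 'I_H -> 'I_S -> 'I_A -> R)
    (delta : R),
    (0 < K)%N ->
    (forall s, 0 <= mu s) -> \sum_(s < S) mu s = 1 ->
    (forall t s a, 0 <= piB t s a) -> (forall t s, \sum_(a < A) piB t s a = 1) ->
    (forall t s a, 0 <= piT t s a) -> (forall t s, \sum_(a < A) piT t s a = 1) ->
    (forall t s a s', 0 <= P t s a s') ->
    (forall t s a, \sum_(s' < S) P t s a s' = 1) ->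
    (forall t s a, 0 <= r t s a <= 1) ->
    0 < delta < 1 ->
    forall Qhat : dataset S A H K -> 'I_H.+1 -> 'M[R]_(S, A),
      (forall D, alg_run r piT P D (Qhat D)) ->
      1 - delta <=
        Prob mu piB P (fun D : dataset S A H K =>
          [forall t : 'I_H,
             `|mdot (rho D t) (Zmat r piT D t (Qhat D (nxt t))
                                - Ymat r piT P t (Qhat D (nxt t)))|
             <= C * H%:R * Num.sqrt (S%:R * ln (H%:R * S%:R / delta) / K%:R)]).
Proof.
exists 8; split; first lra.
move=> S A H K mu piB piT P r delta hK hmu0 hmu hpiB0 hpiB hpiT0 hpiT hP0 hP hr hd Qhat halg.
set u := 8 * Num.sqrt (S%:R * ln (H%:R * S%:R / delta) / K%:R).
set good := (fun D : dataset S A H K => [forall t : 'I_H, _]).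
have hdp : forall D : dataset S A H K, 0 <= data_prob mu piB P D.
  by move=> D; apply: prodr_ge0 => k _; apply: tp_ge0.
have htot : \sum_(D : dataset S A H K) data_prob mu piB P D = 1.
  by rewrite /data_prob sum_dataset tp_sum1 // expr1n.
have hsplit : Prob mu piB P good + Prob mu piB P (fun D => ~~ good D) = 1.
  by rewrite /Prob -htot [RHS](bigID good).
suff hbad : Prob mu piB P (fun D => ~~ good D) <= delta by lra.
set ev := fun (t : 'I_H) (b : {ffun 'I_S -> bool}) (D : dataset S A H K) =>
  K%:R * u < \sum_(k < K) Yf P t (sgnf b) (D k).
have hKr : (0 : R) < K%:R by rewrite ltr0n.
rewrite /Prob.
apply: (@le_trans _ _ (\sum_(D | ~~ good D) \sum_(t < H) \sum_(b : {ffun 'I_S -> bool})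
    (if ev t b D then data_prob mu piB P D else 0))).
  apply: ler_sum => D hb.
  move: hb; rewrite /good negb_forall => /existsP [t ht]; rewrite -ltNge in ht.
  have hQ := Q_bound (halg D) (nxt t).
  have [bb hbb] := mdot_bound D t r P hK hpiT0 hpiT hQ.
  have hH : (0 : R) < H%:R by rewrite ltr0n (leq_ltn_trans (leq0n t) (ltn_ord t)).
  have hev : ev t bb D.
    rewrite /ev.
    have h1 : H%:R * (K%:R * u) < H%:R * \sum_(k < K) Yf P t (sgnf bb) (D k).
      apply: (lt_le_trans _ hbb).
      have -> : H%:R * (K%:R * u) = K%:R * (8 * H%:R *
         Num.sqrt (S%:R * ln (H%:R * S%:R / delta) / K%:R)) by rewrite /u; ring.
      by rewrite ltr_pM2l.
    by rewrite ltr_pM2l in h1.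
  rewrite (bigD1 t) //= (bigD1 bb) //= hev -addrA lerDl.
  have hge : forall t' b', 0 <= (if ev t' b' D then data_prob mu piB P D else 0).
    by move=> t' b'; case: ifP.
  apply: addr_ge0; apply: sumr_ge0 => *; [exact: hge | apply: sumr_ge0 => *; exact: hge].
apply: (@le_trans _ _ (\sum_D \sum_(t < H) \sum_(b : {ffun 'I_S -> bool})
    (if ev t b D then data_prob mu piB P D else 0))).
  rewrite [X in _ <= X](bigID (fun D => ~~ good D)) /= lerDl.
  apply: sumr_ge0 => D _; apply: sumr_ge0 => t _; apply: sumr_ge0 => b _.
  by case: ifP.
rewrite exchange_big /=.
under eq_bigr do rewrite exchange_big /=.
under eq_bigr do under eq_bigr do rewrite -big_mkcond /=.
apply: (@le_trans _ _ (\sum_(t < H) \sum_(b : {ffun 'I_S -> bool}) (delta / (H%:R * 2 ^+ S)))).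
  apply: ler_sum => t _; apply: ler_sum => b _.
  exact: term_bound.
rewrite (eq_bigr (fun _ => (delta / (H%:R * 2 ^+ S)) *+ (2 ^ S)%N)); last by move=> t _; rewrite sumr_const card_ffun card_bool card_ord.
rewrite sumr_const card_ord.
case: H {halg Qhat good hsplit ev u piB P r piT hpiB0 hpiB hpiT0 hpiT hP0 hP hr hdp htot} => [|H].
  rewrite mulr0n; lra.
rewrite -[_ *+ (2 ^ S)%N]mulr_natl -[_ *+ H.+1]mulr_natl natrX.

have h2 : (2 : R) ^+ S != 0 by rewrite expf_neq0 // pnatr_eq0.
have hH0 : (H.+1%:R : R) != 0 by rewrite pnatr_eq0.
rewrite le_eqVlt; apply/orP; left; apply/eqP; field.
rewrite h2 /=; apply/negP => /eqP e; have : (0:R) <= H%:R by []; lra.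
Qed.
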